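(* Let $(X,\tau_\delta)_{\delta>0}$ be a Hilbert dilation system (not necessarily simple), and let $H,V\subseteq X$ be subspaces with $\dim H=\dim V\ge1$ and $V$ dilation-invariant. Define $f(\delta)=\cos\angle(\tau_\delta H,V)$ for $\delta>0$. Then $f$ is unimodal in the sense: whenever $0<a<b<c$ and $f(b)<f(c)$, we have $f(a)<f(b)$.
   Context: Hilbert dilation system: $X$ a finite-dimensional real Hilbert space, $X=\bigoplus_{\nu=1}^mX_\nu$ orthogonal, $\tau_\delta|_{X_\nu}=\delta^{-\nu}\mathrm{id}$ ($\delta>0$). $V$ is dilation-invariant if $\tau_\delta V=V$ for all $\delta>0$. On $\bigwedge^kX$ use the inner product with $\langle v_1\wedge\dots\wedge v_k,w_1\wedge\dots\wedge w_k\rangle=\det(\langle v_i,w_j\rangle)$; for a $k$-dimensional subspace $W$ with basis $w_1,\ldots,w_k$ let $\omega_W=w_1\wedge\dots\wedge w_k$. For $k$-dimensional subspaces $V,W$, $\cos\angle(V,W)=|\langle\omega_V,\omega_W\rangle|/(|\omega_V||\omega_W|)$ (independent of bases). *)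

(* Defs.v *)
From HB Require Import structures.
From mathcomp Require Import all_boot all_order all_algebra.
From mathcomp Require Import reals.
Set Implicit Arguments. Unset Strict Implicit. Unset Printing Implicit Defensive.
Import Order.TTheory GRing.Theory Num.Theory.
Local Open Scope ring_scope.

(* X = R^n (row vectors 'rV[R]_n) with the standard inner product <u,v> = u *m v^T.
   A k-dimensional subspace W is given by a basis, i.e. a row-free matrix
   B : 'M_(k,n) whose rows w_1..w_k span W.
   Inner product on /\^k X:  <v_1/\../\v_k, w_1/\../\w_k> = det(<v_i,w_j>),
   so for bases A, B:  <omega_A, omega_B> = det (A *m B^T). *)
Definition wedge_dot (R : realType) (k n : nat) (A B : 'M[R]_(k, n)) : R :=
  \det (A *m B^T).

Definition wedge_norm (R : realType) (k n : nat) (A : 'M[R]_(k, n)) : R :=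
  Num.sqrt (wedge_dot A A).

Definition cos_angle (R : realType) (k n : nat) (A B : 'M[R]_(k, n)) : R :=
  `|wedge_dot A B| / (wedge_norm A * wedge_norm B).

(* Main.v *)
Require Import Defs.
From HB Require Import structures.
From mathcomp Require Import all_boot all_order all_algebra all_fingroup.
From mathcomp Require Import reals ring lra.
Set Implicit Arguments. Unset Strict Implicit. Unset Printing Implicit Defensive.
Import Order.TTheory GRing.Theory Num.Theory.
Local Open Scope ring_scope.

Section CB.
Variable R : fieldType.

Lemma det_expand (J : finType) k (B : 'I_k -> J -> R) (C : J -> 'I_k -> R) :
  \det (\matrix_(i, j) \sum_x B i x * C x j) =
  \sum_(f : {ffun 'I_k -> J}) (\prod_i B i (f i)) * \det (\matrix_(i, j) C (f i) j).
Proof.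
rewrite /determinant.
transitivity (\sum_(s:'S_k) \sum_(f : {ffun 'I_k -> J})
   (-1)^+s * \prod_i (B i (f i) * C (f i) (s i))).
  apply: eq_bigr => s _; rewrite -big_distrr /=; congr (_ * _).
  rewrite -(bigA_distr_bigA (fun i x => B i x * C x (s i))) /=; apply: eq_bigr => i _; by rewrite mxE.
rewrite exchange_big; apply: eq_bigr => f _; rewrite big_distrr; apply: eq_bigr => s _ /=.
rewrite big_split /=.
under [X in _ = _ * (_ * X)]eq_bigr do rewrite mxE.
by rewrite mulrCA.
Qed.

Lemma gram_CB (J : finType) k (a : 'I_k -> J -> R) (l : J -> R) :
  k`!%:R * \det (\matrix_(i, j) \sum_x a i x * l x * a j x) =
  \sum_(f : {ffun 'I_k -> J}) (\prod_i l (f i)) * \det (\matrix_(i, j) a j (f i)) ^+ 2.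
Proof.
rewrite (det_expand (fun i x => a i x * l x) (fun x j => a j x)).
set D := fun f : {ffun 'I_k -> J} => \det (\matrix_(i,j) a j (f i)).
set S := \sum_f _.
have key : forall s : 'S_k, S = \sum_(f : {ffun 'I_k -> J})
    (-1)^+s * (\prod_i a i (f (s i))) * (\prod_i l (f i)) * D f.
  move=> s; rewrite /S (reindex_inj (h := fun f : {ffun 'I_k -> J} => [ffun i => f (s i)])).
    apply: eq_bigr => f _ /=.
    rewrite big_split /=.
    under eq_bigr do rewrite ffunE.
    have -> : \prod_i l ([ffun i0 => f (s i0)] i) = \prod_i l (f i).
      under eq_bigr do rewrite ffunE.
      by rewrite (reindex_perm s^-1) /=; under eq_bigr do rewrite permKV.
    have -> : \det (\matrix_(i,j) a j ([ffun i0 => f (s i0)] i)) = (-1) ^+ s * D f.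
      rewrite /D -det_perm -det_mulmx -row_permE; congr (\det _).
      by apply/matrixP => i j; rewrite !mxE ffunE.
    by rewrite !mulrA; congr (_ * _); rewrite mulrC -!mulrA; congr (_ * _); rewrite mulrC.
  move=> f g /ffunP E; apply/ffunP => i; move: (E (s^-1 i)%g); by rewrite !ffunE permKV.
transitivity (\sum_(s : 'S_k) S).
  by rewrite sumr_const card_Sn mulr_natl.
under eq_bigr => s _ do rewrite (key s).
rewrite exchange_big; apply: eq_bigr => f _ /=.
have E : \sum_(s:'S_k) (-1)^+s * \prod_i a i (f (s i)) = D f.
  rewrite /D -det_tr /determinant; apply: eq_bigr => s _; congr (_ * _).
  by apply: eq_bigr => i _; rewrite !mxE.
rewrite -big_distrl -big_distrl /= E /D; ring.
Qed.
End CB.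
Section PS.
Variable R : realType.

Lemma bern_nat (r : R) n : 0 <= r -> 1 + n%:R * (r - 1) <= r ^+ n.
Proof.
move=> r0; elim: n => [|n IH]; first by rewrite mul0r addr0 expr0.
rewrite exprS.
have h1 : r * (1 + n%:R * (r - 1)) <= r * r ^+ n by rewrite ler_wpM2l.
have h2 : 0 <= n%:R * (r - 1) ^+ 2 :> R by rewrite mulr_ge0 ?sqr_ge0.
apply: le_trans h1; rewrite -natr1; nra.
Qed.

Lemma bern_int (r : R) (z : int) : 0 < r -> 1 + z%:~R * (r - 1) <= r ^ z.
Proof.
move=> r0; case: z => n.
  by rewrite /exprz -pmulrn; apply: bern_nat; rewrite ltW.
rewrite /exprz NegzE -exprVn.
have ri : 0 < r^-1 by rewrite invr_gt0.
have h := bern_nat n.+1 (ltW ri).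
apply: le_trans h.
rewrite intrN /= -[n.+1%:~R]/(n.+1%:R : R).
have e : r^-1 - 1 + (r - 1) = (r - 1) ^+ 2 / r by field; rewrite gt_eqF.
have : 0 <= (r - 1) ^+ 2 / r by rewrite divr_ge0 ?sqr_ge0 ?ltW.
have : 0 <= n.+1%:R :> R by [].
nra.
Qed.

Lemma term_ineq (a b c : R) (z : int) : 0 < a -> a < b -> b < c ->
  (b - a) / (c - b) * (b ^ z - c ^ z) <= a ^ z - b ^ z.
Proof.
move=> a0 ab bc.
have b0 : 0 < b by apply: lt_trans ab.
have bn0 : b != 0 by rewrite gt_eqF.
have Ea : a ^ z = b ^ z * (a / b) ^ z by rewrite -expfzMl mulrC divfK.
have Ec : c ^ z = b ^ z * (c / b) ^ z by rewrite -expfzMl mulrC divfK.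
have B0 : 0 < b ^ z by apply: exprz_gt0.
have h1 := bern_int z (divr_gt0 a0 b0).
have h2 := bern_int z (divr_gt0 (lt_trans b0 bc) b0).
set Z := z%:~R in h1 h2.
set mu := (b - a) / (c - b).
have mu0 : 0 < mu by rewrite divr_gt0 // subr_gt0.
have hm : mu * (c / b - 1) = 1 - a / b.
  rewrite /mu; field; rewrite ?bn0 //; rewrite subr_eq0 gt_eqF //.
rewrite Ea Ec.
set ra := (a / b) ^ z in h1 *; set rc := (c / b) ^ z in h2 *.
set B := b ^ z in B0 *.
set xa := a / b in h1 hm; set xc := c / b in h2 hm.
have k1 : 0 <= B * (ra - (1 + Z * (xa - 1))) by rewrite mulr_ge0 ?subr_ge0 // ltW.
have k2 : 0 <= mu * B * (rc - (1 + Z * (xc - 1))) by rewrite mulr_ge0 ?subr_ge0 // ltW // mulr_gt0.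
have k3 : mu * B * Z * (xc - 1) = B * Z * (1 - xa) by rewrite -hm; ring.
nra.
Qed.

Definition psum (h : R -> R) := exists (J : finType) (e : J -> R) (z : J -> int),
  (forall j, 0 <= e j) /\ forall d, 0 < d -> h d = \sum_j e j * d ^ z j.

Lemma psum_ge0 h d : psum h -> 0 < d -> 0 <= h d.
Proof.
move=> [J [e [z [e0 E]]]] d0; rewrite E //; apply: sumr_ge0 => j _.
by rewrite mulr_ge0 ?e0 ?exprz_ge0 ?ltW.
Qed.

Lemma psum_pos h d d' : psum h -> 0 < d -> 0 < d' -> 0 < h d -> 0 < h d'.
Proof.
move=> [J [e [z [e0 E]]]] d0 d'0; rewrite !E //.
move=> hp; have [j _ ej] : exists2 j, true & 0 < e j.
  apply/exists_inP; apply: contraLR hp; rewrite negb_exists_in => /forall_inP H.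
  rewrite -leNgt; apply: sumr_le0 => j _.
  have := H j isT; rewrite -leNgt => ej.
  have -> : e j = 0 by apply/eqP; rewrite eq_le ej e0.
  by rewrite mul0r.
rewrite (bigD1 j) //=; apply: ltr_pwDl.
  by rewrite mulr_gt0 ?exprz_gt0.
by apply: sumr_ge0 => i _; rewrite mulr_ge0 ?e0 ?exprz_ge0 ?ltW.
Qed.

Lemma psum_three h a b c : psum h -> 0 < a -> a < b -> b < c ->
  h c < h b -> h b < h a.
Proof.
move=> [J [e [z [e0 E]]]] a0 ab bc.
have b0 : 0 < b by apply: lt_trans ab.
have c0 : 0 < c by apply: lt_trans bc.
rewrite !E // => hcb; rewrite -subr_gt0.
have mu0 : 0 < (b - a) / (c - b) by rewrite divr_gt0 // subr_gt0.
apply: (@lt_le_trans _ _ ((b - a) / (c - b) * (\sum_j e j * b ^ z j - \sum_j e j * c ^ z j))).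
  by rewrite mulr_gt0 // subr_gt0.
rewrite -!sumrB mulr_sumr; apply: ler_sum => j _.
rewrite -!mulrBr mulrCA; apply: ler_wpM2l; first exact: e0.
exact: term_ineq.
Qed.

Lemma psum_mul h1 h2 : psum h1 -> psum h2 -> psum (fun d => h1 d * h2 d).
Proof.
move=> [J1 [e1 [z1 [e10 E1]]]] [J2 [e2 [z2 [e20 E2]]]].
exists (J1 * J2)%type, (fun p => e1 p.1 * e2 p.2), (fun p => z1 p.1 + z2 p.2).
split; first by move=> p; rewrite mulr_ge0.
move=> d d0; rewrite E1 // E2 // big_distrl /=.
rewrite -(pair_bigA _ (fun i j => e1 i * e2 j * d ^ (z1 i + z2 j))) /=.
apply: eq_bigr => i _; rewrite big_distrr /=; apply: eq_bigr => j _.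
rewrite expfzDr ?gt_eqF //; ring.
Qed.

Lemma psum_inv h : psum h -> psum (fun d => h d^-1).
Proof.
move=> [J [e [z [e0 E]]]]; exists J, e, (fun j => - z j); split => // d d0.
rewrite E ?invr_gt0 //; apply: eq_bigr => j _; by rewrite exprz_inv.
Qed.

End PS.

Lemma prod_exprz (R : realType) (I : finType) (d : R) (z : I -> int) : d != 0 ->
  \prod_i d ^ z i = d ^ (\sum_i z i).
Proof.
move=> d0; symmetry; apply: (big_morph (fun z : int => d ^ z)).
  by move=> x y; rewrite expfzDr.
by rewrite expr0z.
Qed.

Theorem lemma4p6 (R : realType) (n m k : nat)
    (Xs : 'I_m -> 'M[R]_n) (tau : R -> 'M[R]_n)
    (hb vb : 'M[R]_(k, n)) :
  (forall i j : 'I_m, i != j -> Xs i *m (Xs j)^T = 0) ->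
  (1%:M <= \sum_(i < m) Xs i)%MS ->
  (forall d : R, 0 < d -> forall (i : 'I_m) (v : 'rV[R]_n),
      (v <= Xs i)%MS -> v *m tau d = d ^- i.+1 *: v) ->
  (1 <= k)%N -> row_free hb -> row_free vb ->
  (forall d : R, 0 < d -> (vb *m tau d == vb)%MS) ->
  let f := fun d : R => cos_angle (hb *m tau d) vb in
  forall a b c : R, 0 < a -> a < b -> b < c ->
    f b < f c -> f a < f b.
Proof.
move=> Horth Hspan Htau k1 hbf vbf Hinv f a b c a0 ab bc.
have [U HU] := sub_sumsmxP Hspan.
pose P i := U i *m Xs i.
have PS1 : \sum_i P i = 1%:M by rewrite HU.
have Porth : forall i j, i != j -> P i *m (P j)^T = 0.
  move=> i j ij; rewrite /P trmx_mul !mulmxA -(mulmxA (U i)) Horth //.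
  by rewrite mulmx0 mul0mx.
have PX : forall i, (P i <= Xs i)%MS by move=> i; rewrite /P submxMl.
clearbody P.
have PPt : forall i, P i *m (P i)^T = (P i)^T.
  move=> i; rewrite -[in RHS](mul1mx (P i)^T) -PS1 mulmx_suml (bigD1 i) //=.
  by rewrite big1 ?addr0 // => j ji; rewrite Porth.
have Psym : forall i, (P i)^T = P i.
  move=> i; have E := congr1 trmx (PPt i); rewrite trmx_mul !trmxK in E.
  by rewrite -{1}(PPt i) E.
have Pmul : forall i j, P i *m P j = if i == j then P i else 0.
  move=> i j; case: eqP => [<-|/eqP ij]; last by rewrite -[P j]Psym Porth.
  by rewrite -{2}[P i]Psym PPt Psym.
have Ptau : forall d, 0 < d -> forall i, P i *m tau d = d ^- i.+1 *: P i.
  move=> d d0 i; apply/row_matrixP => r; rewrite row_mul.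
  have -> : row r (d ^- i.+1 *: P i) = d ^- i.+1 *: row r (P i).
    by apply/rowP => j; rewrite !mxE.
  by apply: Htau => //; apply: submx_trans (PX i); rewrite row_sub.
have taudef : forall d, 0 < d -> tau d = \sum_(i < m) d ^- i.+1 *: P i.
  move=> d d0; rewrite -[tau d]mul1mx -PS1 mulmx_suml.
  by apply: eq_bigr => i _; rewrite Ptau.
have sumPmul : forall al be : 'I_m -> R,
    (\sum_i al i *: P i) *m (\sum_j be j *: P j) = \sum_i (al i * be i) *: P i.
  move=> al be; rewrite mulmx_suml; apply: eq_bigr => i _.
  rewrite mulmx_sumr (bigD1 i) //= big1 ?addr0.
    by rewrite -scalemxAl -scalemxAr Pmul eqxx scalerA.
  by move=> j ji; rewrite -scalemxAl -scalemxAr Pmul eq_sym (negPf ji) !scaler0.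
have tauT : forall d, 0 < d -> (tau d)^T = tau d.
  move=> d d0; rewrite taudef // linear_sum /=; apply: eq_bigr => i _.
  by rewrite linearZ /= Psym.
have tauinv : forall d, 0 < d -> tau d *m tau d^-1 = 1%:M.
  move=> d d0; rewrite !taudef ?invr_gt0 // sumPmul -PS1; apply: eq_bigr => i _.
  by rewrite -exprVn mulfV ?scale1r // expf_neq0 // invr_eq0 gt_eqF.
have tauTT : forall d, 0 < d ->
    tau d *m (tau d)^T = \sum_(i < m) (d ^- i.+1 * d ^- i.+1) *: P i.
  by move=> d d0; rewrite tauT // taudef // sumPmul.
have wpow : forall d : R, 0 < d -> forall i : nat,
    d ^- i.+1 * d ^- i.+1 = d ^ (- ((i.+1 * 2)%N%:Z)).
  move=> d d0 i.
  by rewrite !exprnN -expfzDr ?gt_eqF // -opprD -PoszD addnn -muln2.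
have gram_psum : forall X : 'M[R]_(k, n),
    psum (fun d => \det (X *m tau d *m (X *m tau d)^T)).
  move=> X.
  pose aa (r : 'I_k) (x : 'I_m * 'I_n) := (X *m P x.1) r x.2.
  pose zz (x : 'I_m * 'I_n) : int := - (((x.1 : nat).+1 * 2)%N%:Z).
  exists {ffun 'I_k -> 'I_m * 'I_n}.
  exists (fun g : {ffun 'I_k -> 'I_m * 'I_n} => (k`!%:R)^-1 * \det (\matrix_(i, j) aa j (g i)) ^+ 2).
  exists (fun g : {ffun 'I_k -> 'I_m * 'I_n} => \sum_i zz (g i)).
  split.
    by move=> g; rewrite mulr_ge0 ?sqr_ge0 // invr_ge0 ler0n.
  move=> d d0.
  have E : X *m tau d *m (X *m tau d)^T =
      \matrix_(r, s) \sum_x aa r x * d ^ zz x * aa s x.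
    rewrite trmx_mul -mulmxA (mulmxA (tau d)) tauTT //.
    rewrite mulmx_suml mulmx_sumr.
    apply/matrixP => r s; rewrite [RHS]mxE summxE.
    rewrite -(pair_bigA _ (fun (i : 'I_m) (j : 'I_n) => aa r (i, j) * d ^ zz (i, j) * aa s (i, j))) /=.
    apply: eq_bigr => i _.
    rewrite -scalemxAl -scalemxAr mxE mulmxA.
    have -> : X *m P i *m X^T = (X *m P i) *m (X *m P i)^T.
      by rewrite trmx_mul Psym mulmxA -(mulmxA X (P i) (P i)) Pmul eqxx.
    rewrite mxE big_distrr /=; apply: eq_bigr => j _.
    rewrite mxE wpow // /aa /zz /= !mxE; ring.
  rewrite E.
  have kf : (k`!%:R : R) != 0 by rewrite pnatr_eq0 -lt0n fact_gt0.
  apply: (mulfI kf); rewrite gram_CB mulr_sumr; apply: eq_bigr => g _.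
  rewrite prod_exprz ?gt_eqF // !mulrA mulfV // mul1r; ring.
pose Phi d := \det (hb *m tau d *m (hb *m tau d)^T).
pose Psi d := \det (vb *m tau d *m (vb *m tau d)^T).
pose h d := Phi d * Psi d^-1.
have hps : psum h := psum_mul (gram_psum hb) (psum_inv (gram_psum vb)).
pose c0 := \det (hb *m vb^T).
pose G := \det (vb *m vb^T).
have tau1 : tau 1 = 1%:M.
  rewrite taudef ?ltr01 // -PS1; apply: eq_bigr => i _.
  by rewrite expr1n invr1 scale1r.
have G0 : 0 <= G.
  by have := psum_ge0 (gram_psum vb) ltr01; rewrite tau1 mulmx1.
have fsq : forall d, 0 < d -> f d ^+ 2 = c0 ^+ 2 / h d.
  move=> d d0.
  have d'0 : 0 < d^-1 by rewrite invr_gt0.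
  have /andP [H1 _] : (vb *m tau d == vb)%MS by apply: Hinv.
  have /andP [H2 _] : (vb *m tau d^-1 == vb)%MS by apply: Hinv.
  have [Md EMd] := submxP H1.
  have [Me EMe] := submxP H2.
  have MM : Md *m Me = 1%:M.
    apply: (row_free_inj vbf); rewrite mul1mx -mulmxA -EMe mulmxA -EMd.
    by rewrite -mulmxA tauinv // mulmx1.
  have detMM : \det Md * \det Me = 1 by rewrite -det_mulmx MM det1.
  have Me0 : \det Me != 0.
    by apply/eqP => E; move: detMM; rewrite E mulr0 => /eqP; rewrite eq_sym oner_eq0.
  have Ed : \det Md = (\det Me)^-1.
    by rewrite -[LHS]mulr1 -(mulfV Me0) mulrA detMM mul1r.
  have Enum : wedge_dot (hb *m tau d) vb = c0 * \det Md.
    rewrite /wedge_dot -mulmxA -(tauT d d0) -trmx_mul EMd.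
    by rewrite trmx_mul mulmxA det_mulmx det_tr.
  have EPsi : Psi d^-1 = \det Me ^+ 2 * G.
    rewrite /Psi EMe trmx_mul mulmxA -(mulmxA Me vb) !det_mulmx det_tr /G; ring.
  have Phi0 : 0 <= Phi d by apply: psum_ge0 (gram_psum hb) d0.
  rewrite /f /cos_angle Enum /wedge_norm.
  rewrite expr_div_n exprMn !sqr_sqrtr // ?real_normK ?num_real //.
  rewrite /h EPsi Ed /wedge_dot -/(Phi d) -/G.
  rewrite !invfM exprMn exprVn.
rewrite -exprVn; set x := (\det Me)^-1; set y := (Phi d)^-1; set z := G^-1; ring.
have fge0 : forall d, 0 <= f d.
  by move=> d; rewrite /f /cos_angle divr_ge0 ?normr_ge0 ?mulr_ge0 ?sqrtr_ge0.
move=> fbc.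
have b0 : 0 < b by apply: lt_trans ab.
have cp : 0 < c by apply: lt_trans bc.
have sq : f b ^+ 2 < f c ^+ 2 by rewrite ltr_pXn2r ?nnegrE ?fge0.
rewrite (fsq b) ?(fsq c) // in sq.
have hc : 0 < h c.
  rewrite lt_def psum_ge0 // andbT; apply/negP => /eqP hc0; move: sq.
  by rewrite hc0 invr0 mulr0 ltNge divr_ge0 ?sqr_ge0 ?psum_ge0.
have hb0 : 0 < h b := psum_pos hps cp b0 hc.
have ha0 : 0 < h a := psum_pos hps cp a0 hc.
have cz : 0 < c0 ^+ 2.
  rewrite lt_def sqr_ge0 andbT; apply/negP => /eqP cz; move: sq.
  by rewrite cz !mul0r ltxx.
have hcb : h c < h b.
  by move: sq; rewrite ltr_pM2l // ltf_pV2 ?posrE.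
have hba := psum_three hps a0 ab bc hcb.
rewrite -(ltr_pXn2r (n:=2)) ?nnegrE ?fge0 // fsq ?fsq // ltr_pM2l // ltf_pV2 ?posrE //.
Qed.
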